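(* Let $T$ be a string, let $1\le j\le |T|$, $1\le i\le j+1$, let $w$ be a string, and let $L=T[1..i-1]$, $R=T[j+1..|T|]$ and $T'=LwR$, with $|L|\ge |R|$ and $|w|\le |L|/2$. Suppose $T'$ is periodic and write $T'=(uv)^k u$ with $k\ge 2$ an integer and strings $u,v$ with $|uv|=\mathsf{per}(T')$. Suppose further that $|uvu|>|Lw|$, and let $x=\mathsf{cov}(\mathsf{bord}(uvu))$. Then $x$ covers $uvu$ if and only if $\mathsf{range}(Lw,|x|)\ge |uvu|-\max\{|u|,|x|\}$.
   Context: $S[i..j]$ denotes the factor of $S$ from position $i$ to $j$ (empty if $i>j$). A border of a nonempty string $S$ is a string that is both a proper prefix and a proper suffix of $S$; $\mathsf{bord}(S)$ is the longest border. If $S$ has a border $b$ then $|S|-|b|$ is a period of $S$; $\mathsf{per}(S)$ is the smallest period, and $S$ is periodic if $\mathsf{per}(S)\le |S|/2$. A string $f$ covers $S$ (is a cover of $S$) if every position of $S$ lies inside some occurrence of $f$ in $S$; $\mathsf{cov}(S)$ is the shortest cover of $S$. For $1\le k\le |S|$, $\mathsf{range}(S,k)$ is the largest $r$ such that $S[1..k]$ covers $S[1..r]$. *)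

(* Defs.v *)
(* Strings are sequences over an eqType alphabet A.
   Positions are 0-indexed internally (paper: 1-indexed). *)
From mathcomp Require Import all_boot.
Set Implicit Arguments. Unset Strict Implicit. Unset Printing Implicit Defensive.

Section Strings.
Variable A : eqType.
Implicit Types (S f b : seq A).

Definition is_border b S : bool :=
  (size b < size S) && prefix b S && suffix b S.

Definition bord S : seq A :=
  take (\max_(l < size S | is_border (take l S) S) (l : nat)) S.

Definition is_period (p : nat) S : bool :=
  (0 < p) && all (fun q => onth S q == onth S (q + p)) (iota 0 (size S - p)).

(* per S: the smallest period of S (size S is always a period of a nonempty S). *)
Definition per S : nat := (find (fun p => is_period p S) (iota 1 (size S))).+1.

Definition periodic S : Prop := 2 * per S <= size S.

Definition occurs_at f S (i : nat) : bool :=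
  (i + size f <= size S) && (take (size f) (drop i S) == f).

Definition covers f S : bool :=
  [forall p : 'I_(size S), exists i : 'I_(size S).+1,
     occurs_at f S i && (i <= p < i + size f)].

Definition is_cov x S : Prop :=
  covers x S /\ forall y, covers y S -> size x <= size y.

Definition range S (k : nat) : nat :=
  \max_(r < (size S).+1 | covers (take k S) (take r S)) (r : nat).

End Strings.

(* Main.v *)
Require Import Defs.
From mathcomp Require Import all_boot.
From mathcomp Require Import zify.
Set Implicit Arguments. Unset Strict Implicit. Unset Printing Implicit Defensive.

Definition occ (A : eqType) (f S : seq A) (i : nat) :=
  exists s1 s2, S = s1 ++ f ++ s2 /\ size s1 = i.

Lemma occP (A : eqType) (f S : seq A) i : occurs_at f S i <-> occ f S i.
Proof.
split.
- case/andP => hs /eqP ht.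
  exists (take i S), (drop (i + size f) S); split; last by rewrite size_takel; lia.
  rewrite -{1}(cat_take_drop i S); congr (_ ++ _).
  by rewrite -{1}(cat_take_drop (size f) (drop i S)) ht drop_drop addnC.
- case=> s1 [s2 [-> <-]]; apply/andP; split; first by rewrite !size_cat; lia.
  by rewrite drop_size_cat // take_size_cat.
Qed.

Definition cov' (A : eqType) (f S : seq A) :=
  forall p, p < size S -> exists i, occ f S i /\ i <= p < i + size f.

Lemma coversP (A : eqType) (f S : seq A) : covers f S <-> cov' f S.
Proof.
split.
- move=> /forallP H p hp; have /existsP [i /andP [/occP o h]] := H (Ordinal hp).
  by exists i.
- move=> H; apply/forallP => p; have [i [o h]] := H p (ltn_ord p).
  have hi : i < (size S).+1 by have := ltn_ord p; lia.
  by apply/existsP; exists (Ordinal hi); rewrite /= h andbT; apply/occP.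
Qed.

Lemma occ_size (A : eqType) (f S : seq A) i : occ f S i -> i + size f <= size S.
Proof. by case=> s1 [s2 [-> <-]]; rewrite !size_cat; lia. Qed.

Lemma occ_take (A : eqType) (f S : seq A) i n : occ f S i -> i + size f <= n ->
  occ f (take n S) i.
Proof.
case=> s1 [s2 [-> <-]] h; exists s1, (take (n - size s1 - size f) s2); split=>//.
rewrite take_cat ifN; last lia.
rewrite take_cat ifN; last lia.
by [].
Qed.

Lemma occ_of_take (A : eqType) (f S : seq A) i n : occ f (take n S) i -> occ f S i.
Proof.
case=> s1 [s2 [h <-]]; exists s1, (s2 ++ drop n S); split => //.
by rewrite -{1}(cat_take_drop n S) h -!catA.
Qed.

Lemma cov_pos (A : eqType) (f S : seq A) : cov' f S -> 0 < size S ->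
  0 < size f /\ size f <= size S.
Proof.
move=> H h; have [i [o hi]] := H 0 h; have := occ_size o; lia.
Qed.

Lemma cov_prefix (A : eqType) (f S : seq A) : cov' f S -> 0 < size S -> prefix f S.
Proof.
move=> H h; have [i [[s1 [s2 [e hs]]] hi]] := H 0 h.
have s10 : s1 = [::] by apply/nilP; rewrite /nilp; lia.
by apply/prefixP; exists s2; rewrite e s10.
Qed.

Lemma cov_suffix (A : eqType) (f S : seq A) : cov' f S -> 0 < size S -> suffix f S.
Proof.
move=> H h; have [i [[s1 [s2 [e hs]]] hi]] := H (size S).-1 (ltac:(lia)).
have : size S = size s1 + size f + size s2 by rewrite e !size_cat addnA.
move=> hsz; have s20 : s2 = [::] by apply/nilP; rewrite /nilp; lia.
by apply/suffixP; exists s1; rewrite e s20 cats0.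
Qed.

Lemma occ_prefix (A : eqType) (f S : seq A) : prefix f S -> occ f S 0.
Proof. by case/prefixP => s ->; exists [::], s. Qed.

Lemma occ_suffix (A : eqType) (f S : seq A) : suffix f S -> occ f S (size S - size f).
Proof.
case/suffixP => s ->; exists s, [::]; rewrite cats0; split => //.
rewrite size_cat; lia.
Qed.

Lemma border_cov (A : eqType) (f S : seq A) : prefix f S -> suffix f S ->
  size S <= 2 * size f -> cov' f S.
Proof.
move=> hp hs hz p hpS.
have hf : size f <= size S by case/prefixP: hp => s ->; rewrite size_cat; lia.
case: (ltnP p (size f)) => h.
- by exists 0; split; [apply: occ_prefix | lia].
- by exists (size S - size f); split; [apply: occ_suffix | lia].
Qed.

Lemma cov_take_end (A : eqType) (f S : seq A) e : cov' f S -> size f <= e ->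
  occ f S (e - size f) -> cov' f (take e S).
Proof.
move=> H he o p hp.
have hz := occ_size o.
rewrite size_take in hp.
have hpS : p < size S by move: hp; case: ifP; lia.
have hpe : p < e by move: hp; case: ifP; lia.
have [i [oi hi]] := H p hpS.
case: (leqP (i + size f) e) => h.
- by exists i; split => //; apply: occ_take.
- exists (e - size f); split; last lia.
  by apply: occ_take => //; lia.
Qed.

Lemma occ_overlap (A : eqType) (f S : seq A) s a : occ f S s -> occ f S a ->
  s <= a -> a <= s + size f ->
  take (s + size f - a) f = drop (a - s) f.
Proof.
case=> s1 [s2 [e1 h1]] [t1 [t2 [e2 h2]]] hsa has.
have : drop a S = f ++ t2 by rewrite e2 drop_size_cat.
have : drop a S = drop (a - s) f ++ s2.
  rewrite e1 drop_cat ifN; last lia.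
  rewrite drop_cat h1; case: ifP => hh; first by [].
  have -> : a - s - size f = 0 by lia.
  by rewrite drop0 drop_oversize //; lia.
move=> -> E.
have := congr1 (take (s + size f - a)) E.
rewrite take_size_cat; last by rewrite size_drop; lia.
by rewrite takel_cat; [move=> -> | lia].
Qed.

Lemma sub_cov (A : eqType) (f y S : seq A) o : cov' f S ->
  y = take o f -> y = drop (size f - o) f -> size f <= 2 * o -> o <= size f ->
  cov' y S.
Proof.
move=> H hy1 hy2 ho ho' p hp.
have hy : size y = o by rewrite hy1 size_takel.
have [i [[s1 [s2 [e hs]]] hi]] := H p hp.
case: (ltnP p (i + o)) => h.
- exists i; split; last lia.
  exists s1, (drop o f ++ s2); split => //.
  by rewrite e hy1 (catA (take o f)) cat_take_drop.
- exists (i + (size f - o)); split; last lia.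
  exists (s1 ++ take (size f - o) f), s2; split; last by rewrite size_cat size_takel ?hs; lia.
  by rewrite e hy2 -catA (catA (take _ f)) cat_take_drop.
Qed.

Lemma bord_border (A : eqType) (S : seq A) : 0 < size S ->
  [/\ prefix (bord S) S, suffix (bord S) S & size (bord S) < size S].
Proof.
move=> hS; rewrite /bord.
have : (fun n => n = 0 \/ is_border (take n S) S)
   (\max_(l < size S | is_border (take l S) S) (l : nat)).
  apply: (big_ind (fun n => n = 0 \/ is_border (take n S) S)); first by left.
  - by move=> m n hm hn /=; case: (leqP m n).
  - by move=> l hl; right.
case=> [-> | /andP [/andP [h1 h2] h3]]; last by [].
by rewrite take0 prefix0s suffix0s.
Qed.

Lemma occ_shift (A : eqType) (u v x : seq A) s :
  occ x (u ++ v ++ u) s -> s + size x <= size u -> occ x (u ++ v ++ u) (size (u ++ v) + s).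
Proof.
move=> o h.
have : occ x (take (size u) (u ++ v ++ u)) s by apply: occ_take.
rewrite take_size_cat // => -[t1 [t2 [eu <-]]].
exists (u ++ v ++ t1), t2; split; first by rewrite {2}eu !catA.
by rewrite !size_cat; lia.
Qed.

Lemma cov_nil (A : eqType) : covers (@nil A) [::].
Proof. by apply/coversP => p. Qed.

Lemma core (A : eqType) (u v S P x : seq A) :
  S = u ++ v ++ u -> 0 < size u + size v ->
  P = take (size P) S -> size P < size S -> 2 * (size u + size v) + size u <= 2 * size P ->
  is_cov x (bord S) ->
  covers x S <-> size S - maxn (size u) (size x) <= range P (size x).
Proof.
move=> hS huv hP hPS hPz [hxB hxmin].
have hSz : size S = 2 * size u + size v by rewrite hS !size_cat; lia.
have hSpos : 0 < size S by lia.
have [hBp hBs hBz] := bord_border hSpos.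
set B := bord S in hBp hBs hBz hxB hxmin.
have xB0 : size B = 0 -> x = [::].
  move=> /eqP/nilP hB0; apply/nilP; rewrite /nilp -leqn0.
  by apply: (hxmin [::]); rewrite hB0; apply: cov_nil.
have xB1 : 0 < size B -> [/\ prefix x S, suffix x S, 0 < size x & size x <= size B].
  move=> hB; move/coversP: hxB => hc.
  have [h1 h2] := cov_pos hc hB.
  split => //.
  - exact: prefix_trans (cov_prefix hc hB) hBp.
  - exact: suffix_trans (cov_suffix hc hB) hBs.
have superp : forall o, 0 < size B -> o < size x -> size x <= 2 * o ->
    take o x = drop (size x - o) x -> False.
  move=> o hB ho1 ho2 he.
  have : size x <= size (take o x).
    apply: hxmin; apply/coversP; apply: (sub_cov (o := o)) => //; last lia.
    by apply/coversP.
  rewrite size_takel; lia.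
have takexP : size x <= size P -> take (size x) P = x.
  move=> h; case: (posnP (size B)) => hB.
    by rewrite (xB0 hB) take0.
  have [hp _ _ _] := xB1 hB.
  by rewrite hP take_takel //; apply/eqP; rewrite -prefixE.
have takenP : forall n, n <= size P -> take n P = take n S.
  by move=> n hn; rewrite hP take_takel.
have hxS : size x < size S.
  case: (posnP (size B)) => hB; first by rewrite (xB0 hB).
  by have [_ _ _ h] := xB1 hB; lia.
split.
- move/coversP => hc.
  have [hx1 _] := cov_pos hc hSpos.
  have hB : 0 < size B by case: (posnP (size B)) => // /xB0 e; rewrite e in hx1.
  have [xp xs _ _] := xB1 hB.
  set a := size S - maxn (size u) (size x).
  have oa : occ x S a.
    case: (leqP (size x) (size u)) => hxu.
    + have -> : a = size (u ++ v) + 0 by rewrite /a size_cat; lia.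
      rewrite hS; apply: occ_shift; last lia.
      rewrite -hS; exact: occ_prefix.
    + have -> : a = size S - size x by rewrite /a; lia.
      exact: occ_suffix.
  have ha : 0 < a by rewrite /a; lia.
  have [s' [os hs]] := hc a.-1 (ltac:(lia)).
  set e := s' + size x.
  have he2 : 2 * (e - a) < size x.
    rewrite ltnNge; apply/negP => h.
    have ho := occ_overlap os oa (ltac:(lia)) (ltac:(lia)).
    apply: (superp (s' + size x - a)) => //; try lia.
    by rewrite ho; congr drop; lia.
  have heP : e <= size P by rewrite /e; move: he2; rewrite /e /a; lia.
  have hce : cov' x (take e S).
    apply: cov_take_end => //; first by rewrite /e; lia.
    by rewrite /e addnK.
  have : e <= range P (size x).
    have hi : e < (size P).+1 by lia.
    apply: (leq_bigmax_cond (Ordinal hi)) => /=.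
    rewrite takexP; last by rewrite /e in heP; lia.
    by rewrite takenP //; apply/coversP.
  rewrite /a; lia.
- set n := range P (size x) => hn.
  have hn0 : 0 < n by lia.
  have : (fun r => r = 0 \/ (r <= size P /\ covers (take (size x) P) (take r P))) n.
    apply: (big_ind (fun r => r = 0 \/ (r <= size P /\ covers (take (size x) P) (take r P)))).
    + by left.
    + by move=> m k hm hk /=; case: (leqP m k).
    + move=> r hr; right; split => //; have := ltn_ord r; lia.
  case=> [h0 | [hnP hc]]; first by rewrite h0 in hn0.
  move/coversP: hc => hc.
  have hsz : size (take n P) = n by rewrite size_takel.
  case: (leqP (size x) (size P)) => hxP.
  + rewrite takexP // takenP // in hc.
    have hnz : 0 < size (take n S) by rewrite size_takel; lia.
    have [hx1 _] := cov_pos hc hnz.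
    have hB : 0 < size B by case: (posnP (size B)) => // /xB0 e; rewrite e in hx1.
    have [xp xs _ _] := xB1 hB.
    apply/coversP => p hp.
    case: (ltnP p n) => h1.
    * have [i [oi hi]] := hc p (ltac:(rewrite size_takel; lia)).
      by exists i; split => //; apply: occ_of_take oi.
    case: (leqP (size S - size x) p) => h2.
    * by exists (size S - size x); split; [apply: occ_suffix | lia].
    have hxu : size x < size u by lia.
    have hun : size u + size v <= n by lia.
    have [s [os hs]] := hc (p - (size u + size v)) (ltac:(rewrite size_takel; lia)).
    have os' := occ_of_take os.
    rewrite hS in os'.
    have := occ_shift os' (ltac:(lia)).
    rewrite -hS size_cat => o2.
    by exists (size u + size v + s); split => //; lia.
  + rewrite take_oversize in hc; last lia.
    have hPpos : 0 < size P by lia.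
    have hB : 0 < size B.
      case: (posnP (size B)) => // /xB0 e; rewrite e /= in hxP; lia.
    have [xp xs _ _] := xB1 hB.
    apply/coversP; apply: border_cov => //; lia.
Qed.


Theorem lemma15 (A : eqType) (T w : seq A) (i j : nat)
  (hj : 1 <= j <= size T) (hi : 1 <= i <= j.+1)
  (L R T' : seq A)
  (hL : L = take i.-1 T) (hR : R = drop j T) (hT' : T' = L ++ w ++ R)
  (hLR : size R <= size L) (hw : 2 * size w <= size L)
  (hper : periodic T')
  (u v : seq A) (k : nat) (hk : 2 <= k)
  (hdec : T' = flatten (nseq k (u ++ v)) ++ u)
  (huv : size (u ++ v) = per T')
  (hlong : size (L ++ w) < size (u ++ v ++ u))
  (x : seq A) (hx : is_cov x (bord (u ++ v ++ u))) :
  covers x (u ++ v ++ u) <->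
  size (u ++ v ++ u) - maxn (size u) (size x) <= range (L ++ w) (size x).
Proof.
have huv0 : 0 < size u + size v by rewrite -size_cat huv /per.
case: k hk hdec => [|[|k']] // _ hdec.
rewrite /= -!catA in hdec.
set F := flatten (nseq k' (u ++ v)) in hdec.
have e1 : T' = (u ++ v ++ u) ++ (v ++ F ++ u) by rewrite hdec -!catA.
have e2 : T' = (L ++ w) ++ R by rewrite hT' catA.
have hPS : take (size (L ++ w)) (u ++ v ++ u) = L ++ w.
  have := congr1 (take (size (L ++ w))) e1.
  rewrite takel_cat; last lia.
  by rewrite e2 take_size_cat.
apply: core => //.
have := congr1 size e1; have := congr1 size e2; rewrite !size_cat; lia.
Qed.
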